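(* In classical propositional logic over a set $X$ of propositional variables, let $X',X''$ be a disjoint cover of $X$, and let $\Sigma\subseteq\Pi X$ be a set of models which is definable by a (possibly infinite) theory, i.e. $\Sigma=M(T)$ for some set $T$ of formulas. Then $\Gamma:=\Sigma\upharpoonright X'\times\Pi X''$ (the set of models $\sigma$ such that some $\tau\in\Sigma$ agrees with $\sigma$ on $X'$) is also definable by a theory.
   Context: Models are identified with sequences: $\Pi X$ is the set of all assignments $X\to\{\mathrm{TRUE},\mathrm{FALSE}\}$; $M(T)$ is the set of models of $T$; $\Sigma\upharpoonright X'$ is the set of restrictions to $X'$ of elements of $\Sigma$. *)

(* Defs.v *)
Set Implicit Arguments.

Inductive form (X : Type) : Type :=
| FVar : X -> form X
| FBot : form X
| FNeg : form X -> form X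
| FAnd : form X -> form X -> form X
| FOr  : form X -> form X -> form X
| FImp : form X -> form X -> form X.

Arguments FBot {X}.

Definition model (X : Type) := X -> bool.

Fixpoint sat (X : Type) (m : model X) (phi : form X) : Prop :=
  match phi with
  | FVar x => m x = true
  | FBot => False
  | FNeg p => ~ sat m p
  | FAnd p q => sat m p /\ sat m q
  | FOr p q => sat m p \/ sat m q
  | FImp p q => sat m p -> sat m q
  end.

Definition Mod (X : Type) (T : form X -> Prop) : model X -> Prop :=
  fun m => forall phi, T phi -> sat m phi.

Definition definable (X : Type) (S : model X -> Prop) : Prop :=
  exists T : form X -> Prop, forall m, S m <-> Mod T m.

Definition restr_prod (X : Type) (Sigma : model X -> Prop) (X' : X -> Prop)
  : model X -> Prop :=
  fun s => exists t, Sigma t /\ forall x, X' x -> s x = t x.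

(* Main.v *)
Require Import Defs.
From Stdlib Require Import List Classical ClassicalEpsilon.
From mathcomp Require Import ssreflect ssrfun ssrbool.
From mathcomp Require Import classical_sets.
Import ListNotations.
Local Open Scope classical_set_scope.

Section Compact.
Variable X : Type.

Definition FS (D : form X -> Prop) : Prop :=
  forall l : list (form X), exists v : model X,
    forall psi, In psi l -> D psi -> sat v psi.

Lemma FS_ext (D : form X -> Prop) phi :
  FS D -> FS (fun p => D p \/ p = phi) \/ FS (fun p => D p \/ p = FNeg phi).
Proof.
move=> HD; apply: NNPP => H.
have [l1 H1] : exists l1, ~ exists v : model X, forall psi, In psi l1 -> (D psi \/ psi = phi) -> sat v psi.
  apply: NNPP => Hn; apply: H; left => l; apply: NNPP => Hl; apply: Hn; by exists l.
have [l2 H2] : exists l2, ~ exists v : model X, forall psi, In psi l2 -> (D psi \/ psi = FNeg phi) -> sat v psi.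
  apply: NNPP => Hn; apply: H; right => l; apply: NNPP => Hl; apply: Hn; by exists l.
have H1' : forall v, exists psi, In psi l1 /\ (D psi \/ psi = phi) /\ ~ sat v psi.
  move=> v; apply: NNPP => Hn; apply: H1; exists v => psi Hin HDp.
  apply: NNPP => Hs; apply: Hn; by exists psi.
have H2' : forall v, exists psi, In psi l2 /\ (D psi \/ psi = FNeg phi) /\ ~ sat v psi.
  move=> v; apply: NNPP => Hn; apply: H2; exists v => psi Hin HDp.
  apply: NNPP => Hs; apply: Hn; by exists psi.
have [v Hv] := HD (l1 ++ l2).
case: (classic (sat v phi)) => Hp.
- have [psi [Hin [[Hd|->] Hns]]] := H1' v; apply: Hns => //.
  apply: Hv => //; apply: in_or_app; by left.
- have [psi [Hin [[Hd|->] Hns]]] := H2' v; apply: Hns => //.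
  apply: Hv => //; apply: in_or_app; by right.
Qed.

Lemma compactness (U : form X -> Prop) :
  FS U -> exists v, forall phi, U phi -> sat v phi.
Proof.
move=> HU.
pose P := fun A : set (form X) => FS (fun p => U p \/ A p).
have chainP : forall F : set (set (form X)), F `<=` P -> total_on F subset ->
      P (\bigcup_(Y in F) Y).
  move=> F FP Ftot.
  have key : forall l : list (form X),
     (forall psi, In psi l -> (\bigcup_(Y in F) Y) psi -> False) \/
     exists G, F G /\ forall psi, In psi l -> (\bigcup_(Y in F) Y) psi -> G psi.
    elim=> [|a l IH].
    - by left.
    - case: (classic ((\bigcup_(Y in F) Y) a)) => Ha.
      + case: Ha => G1 FG1 G1a.
        right; case: IH => [Hn|[G2 [FG2 HG2]]].
        * exists G1; split => // psi [<-|Hin] Hb //.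
          by case: (Hn psi Hin Hb).
        * case: (Ftot G1 G2 FG1 FG2) => Hs.
          -- exists G2; split => // psi [<-|Hin] Hb; [by apply: Hs|exact: HG2].
          -- exists G1; split => // psi [<-|Hin] Hb; [done|apply: Hs; exact: HG2].
      + case: IH => [Hn|[G2 [FG2 HG2]]].
        * left => psi [<-|Hin] //; exact: Hn.
        * right; exists G2; split => // psi [<-|Hin] Hb //; exact: HG2.
  move=> l; case: (key l) => [Hn|[G [FG HG]]].
  - have [v Hv] := HU l; exists v => psi Hin [Hu|Hb]; first exact: Hv.
    by case: (Hn psi Hin Hb).
  - have [v Hv] := FP G FG l; exists v => psi Hin [Hu|Hb]; apply: Hv => //.
    + by left.
    + by right; apply: HG.
have [A [PA Amax]] := Zorn_bigcup chainP.
pose D := fun p => U p \/ A p.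
have FSD : FS D by [].
have dich : forall phi, D phi \/ D (FNeg phi).
  move=> phi; case: (classic (A phi)) => Hp; first by left; right.
  case: (@FS_ext D phi FSD) => Hx.
  - exfalso; apply: (Amax (fun p => A p \/ p = phi)).
    + split; first by move=> p Hp'; left.
      by move=> Hs; apply: Hp; apply: Hs; right.
    + move=> l; have [v Hv] := Hx l; exists v => psi Hin [Hu|[Ha|He]];
        apply: Hv => //; [left; left|left; right|right] => //.
  - case: (classic (A (FNeg phi))) => Hq; first by right; right.
    exfalso; apply: (Amax (fun p => A p \/ p = FNeg phi)).
    + split; first by move=> p Hp'; left.
      by move=> Hs; apply: Hq; apply: Hs; right.
    + move=> l; have [v Hv] := Hx l; exists v => psi Hin [Hu|[Ha|He]];
        apply: Hv => //; [left; left|left; right|right] => //.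
have cons : forall (ls : list (form X)) psi, (forall p, In p ls -> D p) ->
    (forall v, (forall p, In p ls -> sat v p) -> sat v psi) -> D psi.
  move=> ls psi Hls Hc; case: (dich psi) => // Hn.
  have [v Hv] := FSD (FNeg psi :: ls).
  exfalso; apply: (Hv (FNeg psi) (or_introl erefl) Hn).
  apply: Hc => p Hp; apply: Hv; [by right|exact: Hls].
have incons : forall ls : list (form X), (forall p, In p ls -> D p) ->
    (forall v, (forall p, In p ls -> sat v p) -> False) -> False.
  move=> ls Hls Hc; have [v Hv] := FSD ls; apply: (Hc v) => p Hp.
  by apply: Hv => //; apply: Hls.
pose v := fun x => if excluded_middle_informative (D (FVar x)) then true else false.
have truth : forall phi, sat v phi <-> D phi.
  elim=> [x|| p IH | p IHp q IHq | p IHp q IHq | p IHp q IHq] /=.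
  - rewrite /v; case: excluded_middle_informative => //= Hn; split => //.
  - split => // Hb; apply: (incons [FBot]) => [p [<-|[]] //|w /(_ FBot (or_introl erefl))] //.
  - split.
    + move=> Hn; case: (dich p) => // Hp; by case: Hn; apply/IH.
    + move=> Hn Hs; apply: (incons [p; FNeg p]) => [r [<-|[<-|[]]] //|w Hw]; first exact/IH.
      exact: (Hw (FNeg p) (or_intror (or_introl erefl)) (Hw p (or_introl erefl))).
  - split.
    + move=> [Hp Hq]; apply: (cons [p; q]) => [r [<-|[<-|[]]]|w Hw]; [exact/IHp|exact/IHq|].
      by split; apply: Hw; [left|right;left].
    + move=> Hd; split; [apply/IHp|apply/IHq]; apply: (cons [FAnd p q]) => [r [<-|[]] //|w Hw];
        by case: (Hw _ (or_introl erefl)).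
  - split.
    + move=> [Hp|Hq].
      * apply: (cons [p]) => [r [<-|[]]|w Hw]; first exact/IHp.
        by left; apply: Hw; left.
      * apply: (cons [q]) => [r [<-|[]]|w Hw]; first exact/IHq.
        by right; apply: Hw; left.
    + move=> Hd; case: (classic (D p)) => Hp; first by left; apply/IHp.
      case: (classic (D q)) => Hq; first by right; apply/IHq.
      exfalso; case: (dich p) => // Hp'; case: (dich q) => // Hq'.
      apply: (incons [FOr p q; FNeg p; FNeg q]) => [r [<-|[<-|[<-|[]]]] //|w Hw].
      case: (Hw _ (or_introl erefl)) => H.
      * exact: (Hw (FNeg p) (or_intror (or_introl erefl)) H).
      * exact: (Hw (FNeg q) (or_intror (or_intror (or_introl erefl))) H).
  - split.
    + move=> Himp; case: (classic (sat v p)) => Hp.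
      * have Hq : D q by apply/IHq; exact: Himp.
        apply: (cons [q] (FImp p q)).
        -- by move=> r [<-|[]].
        -- by move=> w Hw _; apply: Hw; left.
      * have Hp' : D (FNeg p).
          case: (dich p) => // Hp'; by case: Hp; apply/IHp.
        apply: (cons [FNeg p] (FImp p q)).
        -- by move=> r [<-|[]].
        -- by move=> w Hw Hwp; case: (Hw _ (or_introl erefl)).
    + move=> Hd Hp; apply/IHq; apply: (cons [FImp p q; p]) => [r [<-|[<-|[]]] //|w Hw];
        first exact/IHp.
      apply: (Hw _ (or_introl erefl)); by apply: Hw; right; left.
exists v => phi Hphi; apply/truth; by left.
Qed.

End Compact.

Definition lit {X : Type} (m : model X) (x : X) : form X :=
  if m x then FVar x else FNeg (FVar x).

Lemma sat_lit_self (X : Type) (m : model X) x : sat m (lit m x).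
Proof. rewrite /lit; case E: (m x) => /=; [done| by rewrite E]. Qed.

Lemma sat_lit_agree {X : Type} (m s t : model X) x :
  s x = t x -> sat s (lit m x) -> sat t (lit m x).
Proof. rewrite /lit; case: (m x) => /= ->; done. Qed.

Lemma sat_lit_val (X : Type) (m t : model X) x :
  sat t (lit m x) -> t x = m x.
Proof. rewrite /lit; case: (m x) => /=; first done.
case: (t x) => //. Qed.

Definition ftop {X : Type} : form X := FNeg FBot.

Fixpoint bigconj {X : Type} (g : form X -> form X) (l : list (form X)) : form X :=
  match l with
  | nil => ftop
  | a :: l' => FAnd (g a) (bigconj g l')
  end.

Lemma sat_bigconj {X : Type} (g : form X -> form X) (s : model X) l :
  sat s (bigconj g l) <-> forall psi, In psi l -> sat s (g psi).
Proof.
elim: l => [|a l IH] /=; first by split => // _ [].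
split.
- move=> [Ha Hl] psi [<-|Hin] //; exact: (proj1 IH Hl).
- move=> H; split; first by apply: H; left.
  apply/IH => psi Hin; apply: H; by right.
Qed.

Theorem corollary3p3 (X : Type) (X' X'' : X -> Prop)
  (Hdisj : forall x, X' x -> X'' x -> False)
  (Hcover : forall x, X' x \/ X'' x)
  (Sigma : model X -> Prop) (T : form X -> Prop)
  (HT : forall m, Sigma m <-> Mod T m) :
  definable (restr_prod Sigma X').
Proof.
exists (fun phi => forall s, restr_prod Sigma X' s -> sat s phi) => m; split.
- by move=> Hm phi Hphi; apply: Hphi.
- move=> Hm; apply: NNPP => Hng.
  pose U := fun psi => T psi \/ exists x, X' x /\ psi = lit m x.
  have nFS : ~ FS X U.
    move=> HU; have [v Hv] := @compactness X U HU.
    apply: Hng; exists v; split.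
    + apply/HT => phi Hphi; apply: Hv; by left.
    + move=> x Hx; symmetry; apply: sat_lit_val; apply: Hv; right; by exists x.
  have [l Hl] : exists l, forall v : model X, exists psi, In psi l /\ U psi /\ ~ sat v psi.
    apply: NNPP => Hn; apply: nFS => l; apply: NNPP => Hl; apply: Hn; exists l => v.
    apply: NNPP => Hv; apply: Hl; exists v => psi Hin HU; apply: NNPP => Hs; apply: Hv.
    by exists psi.
  pose g := fun psi : form X => if excluded_middle_informative
     (exists x, X' x /\ psi = lit m x) then psi else ftop.
  have Hphi := Hm (FNeg (bigconj g l)).
  apply: (Hphi _) .
  + move=> s [t [St Hst]] Hc.
    have [psi [Hin [HU Hns]]] := Hl t.
    case: HU => [HTp|[x [Hx Hpsi]]].
    * by apply: Hns; apply: (proj1 (HT t) St).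
    * have := proj1 (sat_bigconj g s l) Hc psi Hin.
      rewrite /g; destruct (excluded_middle_informative _) as [Hy|Hn]; last by case: Hn; exists x.
      move=> /= Hs; rewrite Hpsi in Hs; apply: Hns; rewrite Hpsi; exact: (sat_lit_agree _ _ _ _ (Hst x Hx) Hs).
  + apply/sat_bigconj => psi Hin; rewrite /g; destruct (excluded_middle_informative _) as [Hy|Hy]; simpl.
    * case: Hy => x [_ ->]; exact: sat_lit_self.
    * by move=> [].
Qed.
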